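(* Let $G$ be a paratopological group with unit $e$. For every neighborhood $U\subset G$ of $e$ there is a left-invariant $\overline{\mathsf{dist}}$-continuous quasi-pseudometric $d:G\times G\to[0,1]$ whose regularization satisfies $\overline d=\overline d^\circ$ and is a left-invariant right-continuous $\overline{\mathsf{dist}}$-continuous quasi-pseudometric, such that $B_d(x;1)\subset xU$ and $B_{\overline d}(x,1)\subset x\,\mathrm{int}\,\overline{U}$ for every $x\in G$. If $G$ is balanced, then $d$ and $\overline d=\overline d^\circ$ are invariant.
   Context: A paratopological group is a group with a topology making multiplication $G\times G\to G$ continuous (inversion need not be continuous). $G$ is balanced if $e$ has a neighborhood base of open sets $V$ with $xV=Vx$ for all $x\in G$. A quasi-pseudometric is $d:G\times G\to[0,\infty)$ with $d(x,x)=0$ and $d(x,z)\le d(x,y)+d(y,z)$; left-invariant if $d(zx,zy)=d(x,y)$, right-invariant if $d(xz,yz)=d(x,y)$, invariant if both. $B_d(x,\varepsilon)=\{y:d(x,y)<\varepsilon\}$, $B_d(A,\varepsilon)=\bigcup_{a\in A}B_d(a,\varepsilon)$. Right-continuous: $y\mapsto d(x,y)$ continuous for each $x$. For non-empty $A$: $\overline d_A(x)=\inf\{\varepsilon>0:x\in\overline{B_d(A,\varepsilon)}\}$, $\overline d^\circ_A(x)=\inf\{\varepsilon>0:x\in B_d(A,\varepsilon)\cup\mathrm{int}\,\overline{B_d(A,\varepsilon)}\}$; $d$ is $\overline{\mathsf{dist}}$-continuous if every $\overline d_A$ is continuous. $\overline d(x,y)=\overline d_{\{x\}}(y)$ and $\overline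 d^\circ(x,y)=\overline d^\circ_{\{x\}}(y)$. *)

(* Defs.v *)
From HB Require Import structures.
From mathcomp Require Import all_boot all_order all_algebra.
From mathcomp Require Import all_classical all_reals topology normedtype.
Set Implicit Arguments. Unset Strict Implicit. Unset Printing Implicit Defensive.
Import Order.TTheory GRing.Theory Num.Theory numFieldNormedType.Exports.
Local Open Scope classical_set_scope.
Local Open Scope ring_scope.

Definition is_paratop_group (G : topologicalType) (mul : G -> G -> G)
    (inv : G -> G) (e : G) : Prop :=
  [/\ (forall x y z, mul x (mul y z) = mul (mul x y) z),
      (forall x, mul e x = x /\ mul x e = x),
      (forall x, mul (inv x) x = e /\ mul x (inv x) = e)
    & continuous (fun p : G * G => mul p.1 p.2)].

Definition balanced_ptg (G : topologicalType) (mul : G -> G -> G) (e : G) : Prop :=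
  forall W : set G, nbhs e W ->
    exists V : set G, [/\ open V, V e, V `<=` W &
      forall x, (mul x) @` V = (fun v => mul v x) @` V].

Section QPM.
Context {R : realType} {G : topologicalType}.
Implicit Types (d : G -> G -> R) (A : set G).

Definition quasi_pseudometric d : Prop :=
  [/\ (forall x y, 0 <= d x y), (forall x, d x x = 0) &
      (forall x y z, d x z <= d x y + d y z)].

Definition left_invariant (mul : G -> G -> G) d : Prop :=
  forall x y z, d (mul z x) (mul z y) = d x y.
Definition right_invariant (mul : G -> G -> G) d : Prop :=
  forall x y z, d (mul x z) (mul y z) = d x y.
Definition bi_invariant (mul : G -> G -> G) d : Prop :=
  left_invariant mul d /\ right_invariant mul d.

Definition qball d (x : G) (eps : R) : set G := [set y | d x y < eps].
Definition qballA d A (eps : R) : set G := \bigcup_(a in A) qball d a eps.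

Definition right_continuous d : Prop := forall x, continuous (d x).

Definition dbarA d A (x : G) : R :=
  inf [set eps : R | 0 < eps /\ closure (qballA d A eps) x].
Definition dbarcA d A (x : G) : R :=
  inf [set eps : R | 0 < eps /\
        (qballA d A eps `|` interior (closure (qballA d A eps))) x].

Definition dist_continuous d : Prop :=
  forall A, A !=set0 -> continuous (dbarA d A).

Definition dbar d : G -> G -> R := fun x y => dbarA d [set x] y.
Definition dbarc d : G -> G -> R := fun x y => dbarcA d [set x] y.
End QPM.

(* Main.v *)
Require Import Defs.
From HB Require Import structures.
From mathcomp Require Import all_boot all_order all_algebra.
From mathcomp Require Import all_classical all_reals topology normedtype.
From mathcomp Require Import lra.
Import Order.TTheory GRing.Theory Num.Theory numFieldNormedType.Exports.
Local Open Scope classical_set_scope.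
Local Open Scope ring_scope.
Set Implicit Arguments. Unset Strict Implicit.


Section Grp.
Context {G : topologicalType} (mul : G -> G -> G) (inv : G -> G) (e : G).
Context (HG : is_paratop_group mul inv e).

Lemma gmulA x y z : mul x (mul y z) = mul (mul x y) z.
Proof. by case: HG => h _ _ _; apply: h. Qed.
Lemma gmul1g x : mul e x = x. Proof. by case: HG => _ h _ _; case: (h x). Qed.
Lemma gmulg1 x : mul x e = x. Proof. by case: HG => _ h _ _; case: (h x). Qed.
Lemma gmulVg x : mul (inv x) x = e. Proof. by case: HG => _ _ h _; case: (h x). Qed.
Lemma gmulgV x : mul x (inv x) = e. Proof. by case: HG => _ _ h _; case: (h x). Qed.
Lemma gmulKg x y : mul (inv x) (mul x y) = y.
Proof. by rewrite gmulA gmulVg gmul1g. Qed.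
Lemma gmulKVg x y : mul x (mul (inv x) y) = y.
Proof. by rewrite gmulA gmulgV gmul1g. Qed.
Lemma gmulgK x y : mul (mul y x) (inv x) = y.
Proof. by rewrite -gmulA gmulgV gmulg1. Qed.
Lemma gmulgKV x y : mul (mul y (inv x)) x = y.
Proof. by rewrite -gmulA gmulVg gmulg1. Qed.

Lemma mul_cont : continuous (fun p : G * G => mul p.1 p.2).
Proof. by case: HG. Qed.

Lemma lcont a : continuous (mul a).
Proof.
move=> x.
have := @continuous_comp _ _ _ (fun y => (a, y)) (fun p : G * G => mul p.1 p.2) x.
apply.
  by apply: cvg_pair; [exact: cvg_cst | exact: cvg_id].
exact: mul_cont.
Qed.

Lemma rcont a : continuous (fun y => mul y a).
Proof.
move=> x.
have := @continuous_comp _ _ _ (fun y => (y, a)) (fun p : G * G => mul p.1 p.2) x.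
apply.
  by apply: cvg_pair; [exact: cvg_id | exact: cvg_cst].
exact: mul_cont.
Qed.

Lemma cl_img (f : G -> G) S x : continuous f -> closure S x -> closure (f @` S) (f x).
Proof.
move=> fc Sx B /(fc x) /Sx [y [Sy By]]; exists (f y); split => //; by exists y.
Qed.

Lemma cl_id (S : set G) : closure (closure S) = closure S.
Proof. by rewrite -(closure_id _).1 //; exact: closed_closure. Qed.

Lemma le_gtP' {R : realType} (x y : R) : (forall z, y < z -> x <= z) -> x <= y.
Proof.
move=> h; rewrite leNgt; apply/negP => yx.
have := h ((x + y) / 2); lra.
Qed.

End Grp.


Section Gen.
Context {R : realType} {G : topologicalType} (mul : G -> G -> G) (inv : G -> G) (e : G).
Context (HG : is_paratop_group mul inv e).
Context (d : G -> G -> R) (QP : quasi_pseudometric d) (LI : left_invariant mul d)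
  (B1 : forall x y, d x y <= 1).

Let d_ge0 x y : 0 <= d x y. Proof. by case: QP. Qed.
Let d_xx x : d x x = 0. Proof. by case: QP. Qed.
Let d_tri x y z : d x z <= d x y + d y z. Proof. by case: QP. Qed.

Definition Sset A x := [set eps : R | 0 < eps /\ closure (qballA d A eps) x].

Lemma qballA1 x t : qballA d [set x] t = qball d x t.
Proof. by rewrite /qballA bigcup_set1. Qed.

Lemma qballA_mono A s t : s <= t -> qballA d A s `<=` qballA d A t.
Proof. move=> st y [a Aa]; rewrite /qball /= => h; exists a => //; rewrite /qball /=; lra. Qed.

Lemma Sset_up A x s t : Sset A x s -> s <= t -> Sset A x t.
Proof.
move=> [s0 h] st; split; first lra.
by apply: closureS h; apply: qballA_mono.
Qed.

Lemma Sset_ne A x : A !=set0 -> Sset A x 2.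
Proof.
move=> [a Aa]; split; first lra.
apply: subset_closure; exists a => //; rewrite /qball /=.
have := B1 a x; lra.
Qed.

Lemma Sset_lb A x : has_lbound (Sset A x).
Proof. by exists 0 => t [t0 _]; apply: ltW. Qed.

Lemma dbarA_ge0 A x : A !=set0 -> 0 <= dbarA d A x.
Proof.
move=> An; apply: lb_le_inf; first by exists 2; exact: Sset_ne.
by move=> t [t0 _]; apply: ltW.
Qed.

Lemma dbarA_le A x t : Sset A x t -> dbarA d A x <= t.
Proof. by move=> h; apply: (ge_inf (Sset_lb A x)). Qed.

Lemma dbarA_lt A x t : A !=set0 -> dbarA d A x < t -> exists2 s, Sset A x s & s < t.
Proof.
move=> An h.
have [s Ss sl] := @inf_adherent R (Sset A x) (t - dbarA d A x) ltac:(lra)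
  (conj (ex_intro _ 2 (Sset_ne x An)) (Sset_lb A x)).
exists s => //; rewrite /dbarA in h sl *; lra.
Qed.

Lemma L1 A s t y z : closure (qballA d A s) y -> d y z < t ->
  closure (qballA d A (s + t)) z.
Proof.
move=> cy dyz.
set g := mul (inv y) z.
have zE : z = mul y g by rewrite /g (gmulKVg HG).
have := cl_img (@rcont _ _ _ _ HG g) cy; rewrite -zE; apply: closureS.
move=> _ [w [a Aa daw] <-]; exists a => //; rewrite /qball /=.
have h1 : d w (mul w g) = d y z.
  by rewrite -{1}(gmulg1 HG w) LI zE -{1}(gmulg1 HG y) LI.
move: daw; rewrite /qball /= => daw.
have := d_tri a w (mul w g); lra.
Qed.

Context (NB : forall x eps, 0 < eps -> nbhs x (qball d x eps)).

Lemma dist_cont : dist_continuous d.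
Proof.
move=> A An x; apply/cvgrPdist_lt => eps eps0.
have [s Ss sl] := dbarA_lt An (ltac:(lra) : dbarA d A x < dbarA d A x + eps / 2).
have N1 : nbhs x [set y | dbarA d A y < dbarA d A x + eps].
  have NBx := NB x (ltac:(lra) : 0 < eps / 2).
  apply: filterS NBx => y dxy.
  have : Sset A y (s + eps / 2).
    split; first by case: Ss => ? _; lra.
    by apply: L1 dxy; case: Ss.
  move/dbarA_le; move: sl => /= ; lra.
have N2 : nbhs x [set y | dbarA d A x - eps < dbarA d A y].
  have [gxe|gxe] := ltP (dbarA d A x) eps.
    apply: nearW => y; have := dbarA_ge0 y An; move=> /=; lra.
  set t := dbarA d A x - eps / 2.
  have nx : ~ closure (qballA d A t) x.
    move=> cx; have : Sset A x t by split => //; rewrite /t; lra.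
    move/dbarA_le; rewrite /t; lra.
  have : nbhs x (~` closure (qballA d A t)).
    apply: open_nbhs_nbhs; split => //.
    by apply: closed_openC; apply: closed_closure.
  apply: filterS => y ny.
  have : t <= dbarA d A y.
    apply: lb_le_inf; first by exists 2; exact: Sset_ne.
    move=> r [r0 cr]; rewrite leNgt; apply/negP => rt; apply: ny.
    by apply: closureS cr; apply: qballA_mono; apply: ltW.
  rewrite /t /=; lra.
apply: filterS2 N1 N2 => y /= h1 h2; rewrite ltr_norml; apply/andP; split; lra.
Qed.

End Gen.


Section Bar.
Context {R : realType} {G : topologicalType} (mul : G -> G -> G) (inv : G -> G) (e : G).
Context (HG : is_paratop_group mul inv e).
Context (d : G -> G -> R) (QP : quasi_pseudometric d) (LI : left_invariant mul d)
  (B1 : forall x y, d x y <= 1)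
  (NB : forall x eps, 0 < eps -> nbhs x (qball d x eps)).

Let d_ge0 x y : 0 <= d x y. Proof. by case: QP. Qed.
Let d_xx x : d x x = 0. Proof. by case: QP. Qed.
Let d_tri x y z : d x z <= d x y + d y z. Proof. by case: QP. Qed.

Let ne1 (x : G) : [set x] !=set0. Proof. by exists x. Qed.

Lemma SsetE x y t : Sset d [set x] y t <-> 0 < t /\ closure (qball d x t) y.
Proof. by rewrite /Sset /= qballA1. Qed.

Lemma dbar_ge0 x y : 0 <= dbar d x y.
Proof. rewrite /dbar; exact (dbarA_ge0 B1 y (ne1 x)). Qed.

Lemma dbar_leS x y t : 0 < t -> closure (qball d x t) y -> dbar d x y <= t.
Proof. by move=> t0 h; rewrite /dbar; apply: dbarA_le; apply/SsetE. Qed.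

Lemma dbar_le_d x y : dbar d x y <= d x y.
Proof.
apply: le_gtP' => z dz; apply: dbar_leS; first by have := d_ge0 x y; lra.
by apply: subset_closure.
Qed.

Lemma dbar_le1 x y : dbar d x y <= 1.
Proof. exact: le_trans (dbar_le_d x y) (B1 x y). Qed.

Lemma dbar_NB x eps : 0 < eps -> nbhs x (qball (dbar d) x eps).
Proof.
move=> /(NB x); apply: filterS => y; rewrite /qball /=.
have := dbar_le_d x y; lra.
Qed.

Lemma dbar_lt x y t : dbar d x y < t -> exists2 s, 0 < s /\ closure (qball d x s) y & s < t.
Proof.
rewrite /dbar => /(dbarA_lt B1 (ne1 x)) [s /SsetE Ss st]; by exists s.
Qed.

Lemma dbar_QP : quasi_pseudometric (dbar d).
Proof.
split.
- exact: dbar_ge0.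
- move=> x; apply/eqP; rewrite eq_le dbar_ge0 andbT.
  apply: le_gtP' => z z0; apply: dbar_leS => //.
  by apply: subset_closure; rewrite /qball /= d_xx.
- move=> x y z.
  apply/ler_addgt0Pr => eps eps0.
  have [s [s0 cs] sl] := dbar_lt (ltac:(lra) : dbar d x y < dbar d x y + eps / 2).
  have [t [t0 ct] tl] := dbar_lt (ltac:(lra) : dbar d y z < dbar d y z + eps / 2).
  have : dbar d x z <= s + t.
    apply: dbar_leS; first lra.
    rewrite -qballA1 -(cl_id (qballA d [set x] (s + t))).
    apply: closureS ct => w dyw.
    by apply: (L1 HG QP LI) dyw; rewrite qballA1.
  lra.
Qed.

Lemma dbar_LI1 x y z : dbar d (mul z x) (mul z y) <= dbar d x y.
Proof.
apply/ler_addgt0Pr => eps eps0.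
have [s [s0 cs] sl] := dbar_lt (ltac:(lra) : dbar d x y < dbar d x y + eps).
have : dbar d (mul z x) (mul z y) <= s.
  apply: dbar_leS => //.
  have := cl_img (@lcont _ _ _ _ HG z) cs; apply: closureS.
  by move=> _ [w dw <-]; rewrite /qball /= LI.
lra.
Qed.

Lemma dbar_LI : left_invariant mul (dbar d).
Proof.
move=> x y z; apply/eqP; rewrite eq_le dbar_LI1 /=.
have := dbar_LI1 (mul z x) (mul z y) (inv z).
by rewrite !(gmulKg HG).
Qed.

Lemma dbar_RI : right_invariant mul d -> right_invariant mul (dbar d).
Proof.
move=> RI.
have H1 x y z : dbar d (mul x z) (mul y z) <= dbar d x y.
  apply/ler_addgt0Pr => eps eps0.
  have [s [s0 cs] sl] := dbar_lt (ltac:(lra) : dbar d x y < dbar d x y + eps).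
  have : dbar d (mul x z) (mul y z) <= s.
    apply: dbar_leS => //.
    have := cl_img (@rcont _ _ _ _ HG z) cs; apply: closureS.
    by move=> _ [w dw <-]; rewrite /qball /= RI.
  lra.
move=> x y z; apply/eqP; rewrite eq_le H1 /=.
have := H1 (mul x z) (mul y z) (inv z).
by rewrite !(gmulgK HG).
Qed.

Lemma dbar_dbarc : dbar d = dbarc d.
Proof.
apply/funext => x; apply/funext => y; apply/eqP; rewrite eq_le; apply/andP; split.
- apply: lb_le_inf.
    exists 2; split; first lra; left; exists x => //; rewrite /qball /=.
    have := B1 x y; lra.
  move=> t [t0 h]; apply: dbarA_le; split => //.
  case: h => h; first exact: subset_closure.
  exact: interior_subset.
- apply/ler_addgt0Pr => eps eps0.
  have [s [s0 cs] sl] := dbar_lt (ltac:(lra) : dbar d x y < dbar d x y + eps / 2).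
  have : dbarc d x y <= s + eps / 2.
    apply: (ge_inf); first by exists 0 => r [r0 _]; apply: ltW.
    split; first lra; right.
    have := NB y (ltac:(lra) : 0 < eps / 2); rewrite /interior /=.
    apply: filterS => w dw.
    by apply: (L1 HG QP LI) dw; rewrite qballA1.
  lra.
Qed.

Lemma dbar_ball (U : set G) : (forall x, qball d x 1 `<=` mul x @` U) ->
  forall x, qball (dbar d) x 1 `<=` mul x @` interior (closure U).
Proof.
move=> hU x y; rewrite /qball /= => /dbar_lt [s [s0 cs] s1].
exists (mul (inv x) y); last by rewrite (gmulKVg HG).
rewrite /interior /=.
have N : nbhs y (closure (mul x @` U)).
  have := NB y (ltac:(lra) : 0 < 1 - s); apply: filterS => w dw.
  have : closure (qballA d [set x] (s + (1 - s))) w.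
    by apply: (L1 HG QP LI) dw; rewrite qballA1.
  rewrite qballA1 (_ : s + (1 - s) = 1); last lra.
  by apply: closureS; apply: hU.
have N' : nbhs (mul x (mul (inv x) y)) (closure (mul x @` U)) by rewrite (gmulKVg HG).
have Hn : nbhs (mul (inv x) y) (mul x @^-1` closure (mul x @` U)) := @lcont _ _ _ _ HG x (mul (inv x) y) _ N'.
apply: filterS Hn => w /= cw.
have := cl_img (@lcont _ _ _ _ HG (inv x)) cw; rewrite (gmulKg HG).
apply: closureS => _ [_ [u Uu <-] <-]; by rewrite (gmulKg HG).
Qed.

End Bar.


Section W.
Context {R : realType}.
Definition w (k : nat) : R := (2^-1)^+k.
Lemma w_gt0 k : 0 < w k.
Proof. by apply: exprn_gt0; rewrite invr_gt0. Qed.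
Lemma wS k : w k.+1 = w k / 2.
Proof. by rewrite /w exprS mulrC. Qed.
Lemma w0 : w 0 = 1. Proof. by []. Qed.
Lemma w_lt k n : (k < n)%N -> w n < w k.
Proof.
elim: n => // n IH; rewrite ltnS leq_eqVlt => /orP [/eqP ->|/IH h].
  by rewrite wS; have := w_gt0 n; lra.
by rewrite wS; have := w_gt0 n; lra.
Qed.
Lemma w_le k n : w k <= w n -> (n <= k)%N.
Proof. by move=> h; rewrite leqNgt; apply/negP => /w_lt; lra. Qed.
Lemma w_small (eps : R) : 0 < eps -> exists n, w n < eps.
Proof.
move=> e0; exists (Num.truncn eps^-1).+1.
set n := (Num.truncn eps^-1).+1.
have h1 : eps^-1 < n%:R by apply: truncnS_gt.
have h2 : (n < 2 ^ n)%N by apply: ltn_expl.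
have h3 : n%:R < (2 ^ n)%:R :> R by rewrite ltr_nat.
have h4 : w n = ((2 ^ n)%:R)^-1 by rewrite /w natrX exprVn.
rewrite h4 -[eps]invrK ltf_pV2 ?posrE ?invr_gt0 //; last by rewrite ltr0n expn_gt0.
lra.
Qed.
End W.

Section Chain.
Context {R : realType} {G : topologicalType} (mul : G -> G -> G) (inv : G -> G) (e : G).
Context (HG : is_paratop_group mul inv e).
Context (V : nat -> set G) (HV0 : forall n, nbhs e (V n))
  (HV3 : forall n a b c, V n.+1 a -> V n.+1 b -> V n.+1 c -> V n (mul a (mul b c))).

Fixpoint okc (c : seq (nat * G)) : Prop :=
  if c is p :: c' then V p.1 p.2 /\ okc c' else True.
Definition prodc (c : seq (nat * G)) : G := foldr (fun p acc => mul p.2 acc) e c.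
Definition wt (c : seq (nat * G)) : R := \sum_(p <- c) w p.1.

Lemma wt_cons p c : wt (p :: c) = w p.1 + wt c.
Proof. by rewrite /wt big_cons. Qed.
Lemma wt_cat c1 c2 : wt (c1 ++ c2) = wt c1 + wt c2.
Proof. by rewrite /wt big_cat. Qed.
Lemma wt_ge0 c : 0 <= wt c.
Proof. by apply: sumr_ge0 => p _; apply: ltW; apply: w_gt0. Qed.
Lemma wt_le0 c : wt c <= 0 -> c = [::].
Proof.
case: c => [//|p c]; rewrite wt_cons => h; exfalso.
have h1 := @w_gt0 R p.1. have h2 := wt_ge0 c. lra.
Qed.
Lemma prodc_cat c1 c2 : prodc (c1 ++ c2) = mul (prodc c1) (prodc c2).
Proof.
elim: c1 => [|p c1 IH] /=; first by rewrite (gmul1g HG).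
by rewrite /prodc /= -/(prodc _) IH (gmulA HG).
Qed.
Lemma okc_cat c1 c2 : okc (c1 ++ c2) <-> okc c1 /\ okc c2.
Proof.
elim: c1 => [|p c1 IH] /=; first by split => // -[].
by rewrite IH; split => [[? [? ?]]|[[? ?] ?]].
Qed.

Lemma Ve n : V n e. Proof. exact: nbhs_singleton (HV0 n). Qed.
Lemma V_S n : V n.+1 `<=` V n.
Proof. by move=> v hv; have := HV3 (Ve _) (Ve _) hv; rewrite !(gmul1g HG). Qed.
Lemma V_mono m n : (m <= n)%N -> V n `<=` V m.
Proof.
elim: n => [|n IH]; first by rewrite leqn0 => /eqP ->.
rewrite leq_eqVlt => /orP [/eqP ->//|]; rewrite ltnS => /IH h v /V_S; exact: h.
Qed.

Lemma split_chain c (t : R) : c <> [::] -> 0 <= t ->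
  exists c1 p c2, [/\ c = c1 ++ p :: c2, wt c1 <= t &
    (t < wt c1 + w p.1 \/ c2 = [::])].
Proof.
elim: c t => // p c IH t _ t0.
have [wl|wl] := ltP t (w p.1).
  exists [::], p, c; split => //; first by rewrite /wt big_nil.
  by left; rewrite /wt big_nil add0r.
case: c IH => [|q c] IH.
  exists [::], p, [::]; split => //; first by rewrite /wt big_nil.
  by right.
have [|c1 [p' [c2 [E h1 h2]]]] := IH (t - w p.1) _ (ltac:(lra)) => //.
exists (p :: c1), p', c2; split; first by rewrite E.
  by rewrite wt_cons; lra.
by rewrite wt_cons; case: h2 => h2; [left; lra | right].
Qed.

Lemma key m : forall c n, (size c <= m)%N -> okc c -> wt c <= w n -> V n (prodc c).
Proof.
elim: m => [|m IH] c n.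
  by rewrite leqn0 => /nilP -> _ _; rewrite /prodc /=; apply: Ve.
move=> sc oc wc.
case: (eqVneq c [::]) => [->|cn]; first by rewrite /prodc /=; apply: Ve.
have [c1 [[k v] [c2 [E h1 h2]]]] := split_chain (t := w n.+1) (ltac:(by apply/eqP) : c <> [::]) (ltW (w_gt0 _)).
rewrite E wt_cat wt_cons /= in wc.
move: oc; rewrite E okc_cat /= => -[o1 [vk o2]].
have wc2 : wt c2 <= w n.+1.
  case: h2 => [h2|->]; last by rewrite /wt big_nil; apply: ltW; apply: w_gt0.
  by move: wc h2; rewrite wS /=; lra.
have s1 : (size c1 <= m)%N by move: sc; rewrite E size_cat /= addnS ltnS => /(leq_trans (leq_addr _ _)).
have s2 : (size c2 <= m)%N by move: sc; rewrite E size_cat /= addnS ltnS => /(leq_trans (leq_addl _ _)).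
have P1 := IH c1 n.+1 s1 o1 h1.
have P2 := IH c2 n.+1 s2 o2 wc2.
have kn : (n <= k)%N.
  apply: w_le; have := wt_ge0 c1; have := wt_ge0 c2; lra.
rewrite prodc_cat /prodc /= -/(prodc c2).
move: kn; rewrite leq_eqVlt => /orP [/eqP kE|kn].
  have z1 : wt c1 <= 0 by move: wc; rewrite -kE; have := wt_ge0 c2; lra.
  have z2 : wt c2 <= 0 by move: wc; rewrite -kE; have := wt_ge0 c1; lra.
  rewrite (wt_le0 z1) (wt_le0 z2) /= (gmul1g HG) (gmulg1 HG); by rewrite kE.
apply: HV3 => //; exact: (V_mono kn vk).
Qed.

Definition dset (x y : G) := [set r : R | r = 1 \/ exists c, [/\ okc c, mul x (prodc c) = y & r = wt c]].
Definition dch (x y : G) : R := inf (dset x y).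

Lemma dset_lb x y : has_lbound (dset x y).
Proof. exists 0 => r [->|[c [_ _ ->]]]; [lra | exact: wt_ge0]. Qed.
Lemma dset_ne x y : dset x y !=set0.
Proof. by exists 1; left. Qed.
Lemma dch_le x y r : dset x y r -> dch x y <= r.
Proof. by move=> h; apply: (ge_inf (dset_lb x y)). Qed.
Lemma dch_ge0 x y : 0 <= dch x y.
Proof. by apply: lb_le_inf; [exact: dset_ne | move=> r [->|[c [_ _ ->]]]; [lra | exact: wt_ge0]]. Qed.
Lemma dch_le1 x y : dch x y <= 1.
Proof. by apply: dch_le; left. Qed.
Lemma dch_lt x y t : dch x y < t -> exists2 r, dset x y r & r < t.
Proof.
move=> h.
have [r Sr rl] := @inf_adherent R (dset x y) (t - dch x y) ltac:(lra)
  (conj (dset_ne x y) (dset_lb x y)).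
exists r => //; rewrite /dch in h rl *; lra.
Qed.

Lemma dch_QP : quasi_pseudometric dch.
Proof.
split.
- exact: dch_ge0.
- move=> x; apply/eqP; rewrite eq_le dch_ge0 andbT.
  apply: dch_le; right; exists [::]; split => //; last by rewrite /wt big_nil.
  by rewrite /prodc /= (gmulg1 HG).
- move=> x y z.
  have H : forall r1 r2, dset x y r1 -> dset y z r2 -> dch x z <= r1 + r2.
    move=> r1 r2 [->|[c1 [o1 e1 ->]]].
      move=> h2; have r20 : 0 <= r2.
        by case: h2 => [->|[c [_ _ ->]]]; [lra|exact: wt_ge0].
      by have := dch_le1 x z; lra.
    move=> [->|[c2 [o2 e2 ->]]].
      by have := dch_le1 x z; have := wt_ge0 c1; lra.
    apply: dch_le; right; exists (c1 ++ c2); split.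
    + by apply/okc_cat.
    + by rewrite prodc_cat (gmulA HG) e1.
    + by rewrite wt_cat.
  have H2 : forall r2, dset y z r2 -> dch x z - r2 <= dch x y.
    move=> r2 h2; apply: lb_le_inf; first exact: dset_ne.
    by move=> r1 h1; have := H r1 r2 h1 h2; lra.
  have : dch x z - dch x y <= dch y z.
    apply: lb_le_inf; first exact: dset_ne.
    by move=> r2 h2; have := H2 r2 h2; lra.
  lra.
Qed.

Lemma dch_LI : left_invariant mul dch.
Proof.
move=> x y z; rewrite /dch; congr inf; apply/funext => r; apply/propext.
split => -[->|[c [o ec ->]]]; (try by left); right; exists c; split => //.
- by move: ec; rewrite -(gmulA HG) => /(congr1 (mul (inv z))); rewrite !(gmulKg HG).
- by rewrite -(gmulA HG) ec.
Qed.

Lemma dch_v n x v : V n v -> dch x (mul x v) <= w n.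
Proof.
move=> hv; apply: dch_le; right; exists [:: (n, v)]; split => //.
  by rewrite /prodc /= (gmulg1 HG).
by rewrite /wt big_cons big_nil addr0.
Qed.

Lemma dch_lt1 x y : dch x y < 1 -> exists2 u, V 0 u & y = mul x u.
Proof.
move=> /dch_lt [r [->|[c [o ec ->]]]]; first lra.
move=> wc; exists (prodc c) => //.
by apply: (key (leqnn _)) => //; rewrite w0; apply: ltW.
Qed.

Lemma dch_NB x eps : 0 < eps -> nbhs x (qball dch x eps).
Proof.
move=> /w_small [n wn].
have N : nbhs (mul (inv x) x) (V n) by rewrite (gmulVg HG).
have Hn : nbhs x (mul (inv x) @^-1` V n) := @lcont _ _ _ _ HG (inv x) x _ N.
apply: filterS Hn => z /= hz; rewrite /qball /=.
have := dch_v x hz; rewrite (gmulKVg HG); lra.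
Qed.

Definition conjc z (c : seq (nat * G)) := map (fun p => (p.1, mul (inv z) (mul p.2 z))) c.

Lemma dch_RI : (forall n z v, V n v -> V n (mul (inv z) (mul v z))) ->
  right_invariant mul dch.
Proof.
move=> Hc.
have P c z : prodc (conjc z c) = mul (inv z) (mul (prodc c) z).
  elim: c => [|p c IH] /=; first by rewrite /prodc /= (gmul1g HG) (gmulVg HG).
  rewrite /prodc /= -/(prodc _) -/(prodc (conjc z c)) IH.
  by rewrite -(gmulA HG) -[mul (mul p.2 z) _](gmulA HG) (gmulKVg HG) !(gmulA HG).
have O c z : okc c -> okc (conjc z c).
  by elim: c => [|p c IH] //= [hp hc]; split; [exact: Hc | exact: IH].
have W c z : wt (conjc z c) = wt c by rewrite /wt big_map.
have H1 x y z : dch (mul x z) (mul y z) <= dch x y.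
  apply: lb_le_inf; first exact: dset_ne.
  move=> r [->|[c [o ec ->]]]; first exact: dch_le1.
  apply: dch_le; right; exists (conjc z c); split; [exact: O | | by rewrite W].
  by rewrite P -(gmulA HG) (gmulKVg HG) (gmulA HG) ec.
move=> x y z; apply/eqP; rewrite eq_le H1 /=.
have := H1 (mul x z) (mul y z) (inv z).
by rewrite !(gmulgK HG).
Qed.

End Chain.


Section Constr.
Context {G : topologicalType} (mul : G -> G -> G) (inv : G -> G) (e : G).
Context (HG : is_paratop_group mul inv e).

Lemma half W : nbhs e W -> exists A, nbhs e A /\ forall a b, A a -> A b -> W (mul a b).
Proof.
move=> hW.
have N : nbhs (mul (e, e).1 (e, e).2) W by rewrite /= (gmul1g HG).
have := mul_cont HG N => -[[A B] /= [hA hB] hAB].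
exists (A `&` B); split; first exact: filterI.
by move=> a b [Aa _] [_ Bb]; exact: (hAB (a, b)).
Qed.

Lemma cube W : nbhs e W -> exists W', nbhs e W' /\
  forall a b c, W' a -> W' b -> W' c -> W (mul a (mul b c)).
Proof.
move=> /half [A [hA hAW]]; have [B [hB hBA]] := half hA.
exists (A `&` B); split; first exact: filterI.
by move=> a b c [Aa _] [_ Bb] [_ Bc]; apply: hAW => //; apply: hBA.
Qed.

Definition stepP (W W' : set G) := nbhs e W -> [/\ nbhs e W',
  (forall a b c, W' a -> W' b -> W' c -> W (mul a (mul b c))) &
  (balanced_ptg mul e -> forall z v, W' v -> W' (mul (inv z) (mul v z)))].

Lemma step_ex W : exists W', stepP W W'.
Proof.
case: (pselect (nbhs e W)) => hW; last by exists W.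
have [W' [hW' c3]] := cube hW.
case: (pselect (balanced_ptg mul e)) => hb; last first.
  by exists W' => _; split.
have [V [oV Ve VW inv_V]] := hb W' hW'.
exists V => _; split.
- by apply: open_nbhs_nbhs; split.
- by move=> a b c /VW ? /VW ? /VW ?; apply: c3.
- move=> _ z v Vv.
  have : ((fun v => mul v z) @` V) (mul v z) by exists v.
  rewrite -inv_V => -[u Vu E].
  by rewrite -E (gmulKg HG).
Qed.

End Constr.

Unset Implicit Arguments.

Theorem theorem7p4 (R : realType) (G : topologicalType)
    (mul : G -> G -> G) (inv : G -> G) (e : G)
    (HG : is_paratop_group mul inv e) (U : set G) (HU : nbhs e U) :
  exists d : G -> G -> R,
    [/\ [/\ quasi_pseudometric d, (forall x y, d x y <= 1),
            left_invariant mul d & dist_continuous d],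
        dbar d = dbarc d,
        [/\ quasi_pseudometric (dbar d), left_invariant mul (dbar d),
            right_continuous (dbar d) & dist_continuous (dbar d)],
        (forall x, qball d x 1 `<=` (mul x) @` U) /\
        (forall x, qball (dbar d) x 1 `<=` (mul x) @` interior (closure U)) &
        (balanced_ptg mul e -> bi_invariant mul d /\ bi_invariant mul (dbar d))].
Proof.
have [step hstep] := choice (@step_ex G mul inv e HG).
have Hit : forall n, nbhs e (iter n step U).
  elim=> [|n IH] //=; by case: (hstep _ IH).
pose V n := iter n.+1 step U.
have HV0 : forall n, nbhs e (V n) by move=> n; exact: Hit n.+1.
have HV3 : forall n a b c, V n.+1 a -> V n.+1 b -> V n.+1 c -> V n (mul a (mul b c)).
  by move=> n; case: (hstep _ (HV0 n)).
have V0U : V 0 `<=` U.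
  move=> v hv; case: (hstep _ HU) => _ c3 _.
  have := c3 _ _ _ (nbhs_singleton (HV0 0)) (nbhs_singleton (HV0 0)) hv.
  by rewrite !(gmul1g HG).
pose d := @dch R G mul e V.
have QP : quasi_pseudometric d by exact: dch_QP HG V.
have LI : left_invariant mul d by exact: dch_LI HG V.
have B1 : forall x y, d x y <= 1 by move=> x y; exact: dch_le1.
have NB : forall x eps, 0 < eps -> nbhs x (qball d x eps).
  by move=> x eps eps0; apply: (@dch_NB R G mul inv e HG V HV0 x eps eps0).
exists d; split.
- split => //; exact (dist_cont HG QP LI B1 NB).
- exact (dbar_dbarc HG QP LI B1 NB).
- split.
  + exact (dbar_QP HG QP LI B1).
  + exact (dbar_LI HG LI B1).
  + move=> x; exact: (dist_cont HG QP LI B1 NB) (ex_intro _ x erefl).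
  + exact (dist_cont HG (dbar_QP HG QP LI B1) (dbar_LI HG LI B1) (dbar_le1 QP B1) (dbar_NB QP NB)).
- have hb : forall x, qball d x 1 `<=` mul x @` U.
    move=> x y /(dch_lt1 HG HV0 HV3) [] u /V0U Uu ->; by exists u.
  split => //; exact (dbar_ball HG QP LI B1 NB hb).
- move=> bal.
  have RI : right_invariant mul d.
    apply: (@dch_RI R G mul inv e HG V) => n z v; case: (hstep _ (Hit n)) => _ _ /(_ bal); exact.
  split; first by split.
  split; [exact (dbar_LI HG LI B1) | exact (dbar_RI HG B1 RI)].
Qed.
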